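(* Let $f:\mathbb N\to(0,\infty)$ be a function and $\theta>0$. Consider the putative PPF defined for every $\mathbf n=(n_1,\dots,n_k)\in\mathbb N^*$ by $$p_j(\mathbf n)=\frac{f(n_j)}{\sum_{u=1}^k f(n_u)+\theta}\ (j=1,\dots,k),\qquad p_{k+1}(\mathbf n)=\frac{\theta}{\sum_{u=1}^k f(n_u)+\theta}.$$ Suppose this putative PPF satisfies $$p_i(\mathbf n)\,p_j(\mathbf n^{i+})=p_j(\mathbf n)\,p_i(\mathbf n^{j+})\quad\text{for all }\mathbf n\in\mathbb N^*,\ i,j\in\{1,\dots,k(\mathbf n)+1\}.$$ Then there exists $a>0$ such that $f(m)=am$ for all $m\in\mathbb N$.
   Context: Notation: $\mathbb N=\{1,2,\dots\}$ and $\mathbb N^*=\bigcup_{k\ge1}\mathbb N^k$. For $\mathbf n=(n_1,\dots,n_k)$ write $k(\mathbf n)=k$. For $j\le k$, $\mathbf n^{j+}$ is $\mathbf n$ with its $j$th entry increased by $1$; $\mathbf n^{(k+1)+}=(n_1,\dots,n_k,1)$. A putative PPF is a sequence of functions $p_j$ on $\mathbb N^*$ with $p_j(\mathbf n)\ge0$ and $\sum_{j=1}^{k(\mathbf n)+1}p_j(\mathbf n)=1$. *)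

(* Defs.v *)
From Stdlib Require Import Reals Lra Lia Arith List Bool.
Import ListNotations.
Open Scope R_scope.

Definition in_Nstar (n : list nat) : Prop :=
  n <> nil /\ Forall (fun x => (1 <= x)%nat) n.

Definition kk (n : list nat) : nat := length n.

(* increase the entry at 0-based position i by one *)
Fixpoint incr_at (n : list nat) (i : nat) : list nat :=
  match n, i with
  | nil, _ => nil
  | x :: t, O => S x :: t
  | x :: t, S i' => x :: incr_at t i'
  end.

(* n^{j+} for 1 <= j <= k(n)+1 (1-based j, as in the paper) *)
Definition nplus (n : list nat) (j : nat) : list nat :=
  if (j <=? length n)%nat then incr_at n (j - 1) else n ++ [1%nat].

Definition fsum (f : nat -> R) (n : list nat) : R :=
  fold_right (fun x acc => f x + acc) 0 n.

(* the putative PPF p_j(n) of the corollary (1-based j; 0 outside 1..k+1) *)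
Definition pf (f : nat -> R) (theta : R) (n : list nat) (j : nat) : R :=
  if andb (1 <=? j)%nat (j <=? length n)%nat
  then f (nth (j - 1) n 0%nat) / (fsum f n + theta)
  else if (j =? S (length n))%nat then theta / (fsum f n + theta)
  else 0.

(* Main.v *)
Require Import Defs.
From Stdlib Require Import Reals List Lra Lia.
Import ListNotations.
Open Scope R_scope.

Theorem corollary1 (f : nat -> R) (theta : R)
  (hf : forall m : nat, (1 <= m)%nat -> 0 < f m)
  (htheta : 0 < theta)
  (hsym : forall (n : list nat), in_Nstar n ->
     forall i j : nat,
       (1 <= i <= S (kk n))%nat -> (1 <= j <= S (kk n))%nat ->
       pf f theta n i * pf f theta (nplus n i) j
       = pf f theta n j * pf f theta (nplus n j) i) :
  exists a : R, 0 < a /\ forall m : nat, (1 <= m)%nat -> f m = a * INR m.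
Proof.
  assert (step : forall m, (1 <= m)%nat -> f (S m) = f m + f 1%nat).
  { intros m hm.
    assert (hin : in_Nstar [m]).
    { split; [discriminate | constructor; [exact hm | constructor]]. }
    specialize (hsym [m] hin 1%nat 2%nat ltac:(cbn; lia) ltac:(cbn; lia)).
    cbn in hsym.
    pose proof (hf m hm) as h1. pose proof (hf (S m) ltac:(lia)) as h2.
    pose proof (hf 1%nat ltac:(lia)) as h3.
    rewrite !Rplus_0_r in hsym.
    set (A := f m) in *. set (B := f (S m)) in *. set (C := f 1%nat) in *.
    apply (f_equal Rinv) in hsym.
    field_simplify in hsym; try lra.
    unfold Rdiv in hsym. apply Rmult_eq_reg_r in hsym.
    2:{ apply Rinv_neq_0_compat. nra. }
    assert ((A + theta) * (B - (A + C)) = 0) by nra.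
    apply Rmult_integral in H. lra. }
  exists (f 1%nat). split. apply hf; lia.
  intros m hm. induction m as [|m IH]. lia.
  destruct m. simpl. lra.
  rewrite step by lia. rewrite IH by lia. rewrite !S_INR. ring.
Qed.
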